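(* Let $n\ge1$, let $K$ be a simplicial complex on $[m]$, and let $c=c_1\times\dots\times c_m$ be a cell of $\mathcal{Z}_K(D^n,S^{n-1})$ with all $c_i\in\{-,+,\bullet\}$, such that $c(+)\ne-\infty$ and $c_i=+$ holds if and only if $i=c(+)$. Let $I=\{c(+)\}\cup\mathrm{supp}(c)$. Then $c\in\mathrm{Crit}(K)$ if and only if $c_I\in\mathrm{Crit}(K_I)$ and $K_I=2^I\setminus\{I\}$.
   Context: Give $D^n$ the regular CW structure with cells $e_-^i,e_+^i$ ($0\le i\le n-1$; $e_\pm^i$ the two open hemispheres of $S^i\subseteq S^{n-1}$, with closure of $e_\pm^{i}$ equal to $e_\pm^i\cup\bigcup_{j<i}(e_-^j\cup e_+^j)$) and top cell $e_\bullet^n$; products of disks get the product cell structure. Write $-,+,\bullet$ for $e_-^0,e_+^{n-1},e_\bullet^n$. A simplicial complex $L$ on a finite totally ordered ground set $V=\{v_1<\dots<v_k\}$ (identified with $[k]$ via $v_j\mapsto j$) is a family of subsets of $V$ closed under subsets. $\mathrm{supp}(c)=\{i:c_i=\bullet\}$; $\mathcal{Z}_L(D^n,S^{n-1})$ is the subcomplex of $(D^n)^k$ of cells $c$ with $\mathrm{supp}(c)\in L$; $G_L$ is the directed graph on these cells with edges $c\to c'$ when $c'$ lies in the closure of $c$ and $\dim c'=\dim c-1$. Let $\mathcal{M}$ consist of $e_-^{i+1}\to e_+^i$ ($0\le i\le n-2$) and $e_\bullet^n\to e_+^{n-1}$. Put $\mathcal{M}_1=\{c\to c'\in G_L:c_1\to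 c_1'\in\mathcal{M}\}$ and for $1\le j\le k-1$, $\mathcal{M}_{j+1}=\{c\to c'\in G_L:$ neither $c$ nor $c'$ lies in an edge of $\mathcal{M}_1\cup\dots\cup\mathcal{M}_j$, and $c_{j+1}\to c'_{j+1}\in\mathcal{M}\}$; $\mathcal{M}_L=\bigcup_j\mathcal{M}_j$. $\mathrm{Crit}(L)$ is the set of cells lying in no edge of $\mathcal{M}_L$. For $I\subseteq[m]$, $K_I=\{\sigma\in K:\sigma\subseteq I\}$ is regarded as a complex on the ordered ground set $I$, and $c_I$ is the product of the $c_i$, $i\in I$, in increasing order of $i$. $2^I$ is the set of all subsets of $I$. $c(+)=\min\{i:c_i=+\}$, or $-\infty$ if no coordinate is $+$. *)

(* Defs.v *)
From mathcomp Require Import all_boot all_order.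
Set Implicit Arguments. Unset Strict Implicit. Unset Printing Implicit Defensive.

(* Cells of D^n:  Em i = e_-^i,  Ep i = e_+^i  (valid for i <= n-1),  Eb = e_bullet^n. *)
Inductive dcell : Type := Em of nat | Ep of nat | Eb.

Definition dvalid (n : nat) (a : dcell) : Prop :=
  match a with Em i => i < n | Ep i => i < n | Eb => True end.

Definition ddim (n : nat) (a : dcell) : nat :=
  match a with Em i => i | Ep i => i | Eb => n end.

Definition dclosure (b a : dcell) : Prop :=
  match a with
  | Em i => b = Em i \/ exists j, j < i /\ (b = Em j \/ b = Ep j)
  | Ep i => b = Ep i \/ exists j, j < i /\ (b = Em j \/ b = Ep j)
  | Eb => True
  end.

Definition is_top (a : dcell) : bool := if a is Eb then true else false.

Definition Mpair (n : nat) (a b : dcell) : Prop :=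
  (exists i, i <= n - 2 /\ 0 < n.-1 /\ a = Em i.+1 /\ b = Ep i)
  \/ (a = Eb /\ b = Ep n.-1).

Section Cells.
Variable k : nat.
Definition pcell := 'I_k -> dcell.

Definition supp (c : pcell) : {set 'I_k} := [set i | is_top (c i)].

Definition is_complex (L : {set {set 'I_k}}) : Prop :=
  forall s t : {set 'I_k}, t \subset s -> s \in L -> t \in L.

Definition cellZ (n : nat) (L : {set {set 'I_k}}) (c : pcell) : Prop :=
  (forall i, dvalid n (c i)) /\ supp c \in L.

Definition pdim (n : nat) (c : pcell) : nat := \sum_(i < k) ddim n (c i).

Definition edgeG (n : nat) (L : {set {set 'I_k}}) (c c' : pcell) : Prop :=
  cellZ n L c /\ cellZ n L c' /\ (forall i, dclosure (c' i) (c i))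
  /\ pdim n c' + 1 = pdim n c.

(* edges of G_L whose j-th coordinate (0-based) is an edge of M *)
Definition Mbase (n : nat) (L : {set {set 'I_k}}) (j : nat) (c c' : pcell) : Prop :=
  edgeG n L c c' /\ exists Hj : j < k, Mpair n (c (Ordinal Hj)) (c' (Ordinal Hj)).

Definition touches (R : pcell -> pcell -> Prop) (c : pcell) : Prop :=
  exists d, R c d \/ R d c.

(* Mupto n L j = M_1 u ... u M_{j+1}  (paper's 1-based indices) *)
Fixpoint Mupto (n : nat) (L : {set {set 'I_k}}) (j : nat) : pcell -> pcell -> Prop :=
  match j with
  | 0 => Mbase n L 0
  | j'.+1 => fun c c' => Mupto n L j' c c' \/
      (Mbase n L j'.+1 c c' /\ ~ touches (Mupto n L j') c /\ ~ touches (Mupto n L j') c')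
  end.

Definition ML (n : nat) (L : {set {set 'I_k}}) : pcell -> pcell -> Prop := Mupto n L k.-1.

Definition Crit (n : nat) (L : {set {set 'I_k}}) (c : pcell) : Prop :=
  cellZ n L c /\ ~ touches (ML n L) c.
End Cells.

(* Restriction to I \subseteq [m], with ground set I identified with [#|I|]
   order-preservingly via enum_val (enum of a set of ordinals is increasing). *)
Definition Iemb (m : nat) (I : {set 'I_m}) (j : 'I_#|I|) : 'I_m := enum_val j.

Definition restrictK (m : nat) (K : {set {set 'I_m}}) (I : {set 'I_m})
  : {set {set 'I_#|I|}} := [set s : {set 'I_#|I|} | (@Iemb m I) @: s \in K].

Definition restrictc (m : nat) (c : pcell m) (I : {set 'I_m}) : pcell #|I| :=
  fun j => c (@Iemb m I j).
Arguments restrictc [m] c I _.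

(* Main.v *)
Require Import Defs.
From mathcomp Require Import all_boot all_order.
From Stdlib Require Import FunctionalExtensionality.
From mathcomp Require Import zify.
Set Implicit Arguments. Unset Strict Implicit. Unset Printing Implicit Defensive.

Lemma sorted_enum m (A : {set 'I_m}) : sorted ltn (map val (enum A)).
Proof.
have -> : enum A = filter (mem A) (enum 'I_m) by rewrite {1}/enum_mem -enumT.
apply: (subseq_sorted ltn_trans _ (iota_ltn_sorted 0 m)).
rewrite -val_enum_ord; apply: map_subseq; exact: filter_subseq.
Qed.

Lemma ev_mono m (A : {set 'I_m}) (i j : 'I_#|A|) :
  i < j -> val (enum_val i) < val (enum_val j).
Proof.
move=> ij.
have x0 : 'I_m := enum_val i.
rewrite (enum_val_nth x0 i) (enum_val_nth x0 j).
have hs : size (enum A) = #|A| by rewrite cardE.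
rewrite -!(nth_map x0 (val x0)) ?hs //.
apply: (sorted_ltn_nth ltn_trans _ (sorted_enum A)) => //;
by rewrite inE size_map hs.
Qed.

Definition upd k (x : pcell k) (q : 'I_k) (a : dcell) : pcell k :=
  fun i => if i == q then a else x i.

Section Gen.
Variable k : nat.
Implicit Types (x y : pcell k).

Lemma supp_updEb x q : supp (upd x q Eb) = q |: supp x.
Proof. by apply/setP => i; rewrite !inE /upd; case: eqP. Qed.

Lemma supp_updEp x q a : supp (upd x q (Ep a)) = supp x :\ q.
Proof. by apply/setP => i; rewrite !inE /upd; case: eqP. Qed.

Lemma upd_same x q a : x q = a -> upd x q a = x.
Proof. by move=> H; apply: functional_extensionality => i; rewrite /upd; case: eqP => [->|]. Qed.

Lemma updK x q a b : upd (upd x q a) q b = upd x q b.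
Proof. by apply: functional_extensionality => i; rewrite /upd; case: eqP. Qed.

Lemma upd_eq x q a : upd x q a q = a.
Proof. by rewrite /upd eqxx. Qed.

Lemma upd_neq x q a i : i != q -> upd x q a i = x i.
Proof. by rewrite /upd => /negbTE ->. Qed.
End Gen.

Lemma Mpair_Em0l n a : ~ Mpair n (Em 0) a.
Proof. by case => [[i [_ [_ [H _]]]] | [H _]]. Qed.
Lemma Mpair_Em0r n a : ~ Mpair n a (Em 0).
Proof. by case => [[i [_ [_ [_ H]]]] | [_ H]]. Qed.
Lemma Mpair_Ebr n a : ~ Mpair n a Eb.
Proof. by case => [[i [_ [_ [_ H]]]] | [_ H]]. Qed.
Lemma Mpair_Epl n i b : ~ Mpair n (Ep i) b.
Proof. by case => [[j [_ [_ [H _]]]] | [H _]]. Qed.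
Lemma Mpair_Eb n b : Mpair n Eb b -> b = Ep n.-1.
Proof. by case => [[j [_ [_ [H _]]]] | [_ H]]. Qed.
Lemma Mpair_toEp n a : 1 <= n -> Mpair n a (Ep n.-1) -> a = Eb.
Proof.
move=> n1; case => [[j [H1 [H2 [_ H]]]] | [H _]] //.
case: H => Hj; lia.
Qed.
Lemma Mpair_irr n a : ~ Mpair n a a.
Proof. by case => [[j [_ [_ [H1 H2]]]] | [H1 H2]]; rewrite H1 in H2. Qed.
Lemma Mpair_dim n a b : 1 <= n -> Mpair n a b -> ddim n b + 1 = ddim n a.
Proof.
move=> n1; case => [[j [_ [_ [-> ->]]]] | [-> ->]] /=; lia.
Qed.
Lemma clos_dim n a b : dclosure b a -> dvalid n b -> ddim n b <= ddim n a.
Proof.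
case: a => [i|i|] /=.
- by case => [->|[j [ji [->|->]]]] //= _; apply: ltnW.
- by case => [->|[j [ji [->|->]]]] //= _; apply: ltnW.
- by case: b => [j|j|] //= _ /ltnW.
Qed.
Lemma clos_eq n a b : dclosure b a -> dvalid n b -> ddim n b = ddim n a -> b = a.
Proof.
case: a => [i|i|] /=.
- by case => [->|[j [ji [->|->]]]] //= _ E; rewrite E ltnn in ji.
- by case => [->|[j [ji [->|->]]]] //= _ E; rewrite E ltnn in ji.
- by case: b => [j|j|] //= _ H E; rewrite E ltnn in H.
Qed.
Lemma clos_refl a : dclosure a a.
Proof. by case: a => [i|i|] //=; left. Qed.

Lemma sum_le_eq k (P : pred 'I_k) (f g : 'I_k -> nat) :
  (forall i, P i -> f i <= g i) -> \sum_(i | P i) f i = \sum_(i | P i) g i ->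
  forall i, P i -> f i = g i.
Proof.
move=> Hle Hs i Pi; apply/eqP; rewrite eqn_leq Hle //=; apply: contraT.
rewrite -ltnNge => lt.
move: Hs; rewrite (bigD1 i) //= [in RHS](bigD1 i) //=.
have : \sum_(j | P j && (j != i)) f j <= \sum_(j | P j && (j != i)) g j.
  by apply: leq_sum => j /andP [Pj _]; apply: Hle.
move: lt; set a := \sum_(j | _) f j; set b := \sum_(j | _) g j.
move=> lt H1 H2; lia.
Qed.

Section Match.
Variables (k n : nat) (L : {set {set 'I_k}}).
Hypothesis n1 : 1 <= n.
Implicit Types (x y : pcell k).

Lemma edge_same x y (q : 'I_k) : edgeG n L x y -> Mpair n (x q) (y q) ->
  forall i, i != q -> x i = y i.
Proof.
move=> [[Vx _] [[Vy _] [Hcl Hd]]] Hp.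
have Hle : forall i, ddim n (y i) <= ddim n (x i).
  by move=> i; apply: clos_dim.
have Hq := Mpair_dim n1 Hp.
move: Hd; rewrite /pdim (bigD1 q) //= [in RHS](bigD1 q) //= => Hd.
have Hs : \sum_(i | i != q) ddim n (y i) = \sum_(i | i != q) ddim n (x i).
  by move: Hd Hq; set a := \sum_(i | _) _; set b := \sum_(i | _) _; lia.
move=> i iq; symmetry; apply: clos_eq => //.
exact: (sum_le_eq (fun i _ => Hle i) Hs).
Qed.

Lemma Mupto_mono j j' x y : j <= j' -> Mupto n L j x y -> Mupto n L j' x y.
Proof.
elim: j' => [|j' IH].
  by rewrite leqn0 => /eqP ->.
rewrite leq_eqVlt => /orP [/eqP -> // | H] M.
by left; apply: IH.
Qed.

Lemma touches_mono j j' x : j <= j' -> touches (Mupto n L j) x -> touches (Mupto n L j') x.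
Proof.
by move=> H [d [M|M]]; exists d; [left|right]; apply: Mupto_mono H M.
Qed.

Lemma Mupto_inv j x y : Mupto n L j x y -> exists l, l <= j /\ Mbase n L l x y /\
  (forall l', l = l'.+1 -> ~ touches (Mupto n L l') x /\ ~ touches (Mupto n L l') y).
Proof.
elim: j => [|j IH] /=.
  by move=> H; exists 0; split => //; split => // l'.
case => [/IH [l [lj H]] | [Hb [Hx Hy]]].
  by exists l; split => //; apply: leqW.
by exists j.+1; split => //; split => // l' [<-].
Qed.

Lemma Mbase_at l x y (q : 'I_k) : Mbase n L l x y -> val q = l ->
  edgeG n L x y /\ Mpair n (x q) (y q).
Proof.
move=> [He [Hl Hp]] ql; split => //.
by have -> : q = Ordinal Hl by apply: val_inj.
Qed.

Lemma Mbase_lt l x y : Mbase n L l x y -> l < k.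
Proof. by case=> _ [Hl _]. Qed.

Lemma Mbase_Em0 l x y (q : 'I_k) : Mbase n L l x y -> val q = l ->
  x q = Em 0 \/ y q = Em 0 -> False.
Proof.
move=> M ql; have [_ Hp] := Mbase_at M ql.
by case => E; rewrite E in Hp; [apply: Mpair_Em0l Hp | apply: Mpair_Em0r Hp].
Qed.

Lemma partner_src l x y (q : 'I_k) : Mbase n L l x y -> val q = l ->
  x q = Eb -> y = upd x q (Ep n.-1).
Proof.
move=> M ql E; have [He Hp] := Mbase_at M ql.
apply: functional_extensionality => i; rewrite /upd; case: eqP => [->|/eqP ne].
  by rewrite E in Hp; apply: Mpair_Eb.
by symmetry; apply: (edge_same He Hp).
Qed.

Lemma partner_tgt l x y (q : 'I_k) : Mbase n L l y x -> val q = l ->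
  x q = Ep n.-1 -> y = upd x q Eb.
Proof.
move=> M ql E; have [He Hp] := Mbase_at M ql.
apply: functional_extensionality => i; rewrite /upd; case: eqP => [->|/eqP ne].
  by rewrite E in Hp; apply: Mpair_toEp Hp.
by apply: (edge_same He Hp).
Qed.

Definition low x (q : nat) := forall i : 'I_k, i < q -> x i = Em 0.

Lemma low_untouched x (q j : nat) : j < q -> low x q -> ~ touches (Mupto n L j) x.
Proof.
move=> jq Hx [d [M|M]]; have [l [lj [Mb _]]] := Mupto_inv M;
  have Hl := Mbase_lt Mb; apply: (Mbase_Em0 (q := Ordinal Hl) Mb) => //;
  [left|right]; apply: Hx => /=; lia.
Qed.

Lemma Mupto_low x y (q : 'I_k) : Mbase n L q x y -> low x q -> low y q ->
  Mupto n L q x y.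
Proof.
move=> M Hx Hy.
move: M Hx Hy; case: (val q) => [|q'] //= M Hx Hy.
right; split => //; split; apply: (low_untouched (q := q'.+1)) => //.
Qed.

Lemma mk_edge (q : 'I_k) x : cellZ n L x -> x q = Eb -> supp x :\ q \in L ->
  Mbase n L q x (upd x q (Ep n.-1)).
Proof.
move=> [Vx Sx] Eq Sq; split; last first.
  exists (ltn_ord q); have -> : Ordinal (ltn_ord q) = q by apply: val_inj.
  by rewrite upd_eq Eq; right.
split; first by [].
split.
  split; last by rewrite supp_updEp.
  by move=> i; rewrite /upd; case: eqP => _ //=; lia.
split.
  by move=> i; rewrite /upd; case: eqP => [->|_]; [rewrite Eq | apply: clos_refl].
rewrite /pdim (bigD1 q) //= [in RHS](bigD1 q) //= upd_eq Eq /=.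
have -> : \sum_(i | i != q) ddim n (upd x q (Ep n.-1) i) = \sum_(i | i != q) ddim n (x i).
  by apply: eq_bigr => i iq; rewrite upd_neq.
set a := \sum_(i | _) _; lia.
Qed.

Lemma low_upd x (q : nat) (r : 'I_k) a : low x q -> q <= r -> low (upd x r a) q.
Proof.
move=> H qr i iq; rewrite upd_neq; first exact: H.
by apply/eqP => E; rewrite E in iq; lia.
Qed.

Lemma ML_of j x y : j < k -> Mupto n L j x y -> ML n L x y.
Proof. by move=> jk M; apply: (Mupto_mono _ M); lia. Qed.

End Match.

Lemma min_ord k (A : {set 'I_k}) (i0 : 'I_k) : i0 \in A ->
  exists2 u, u \in A & forall i, i \in A -> u <= i.
Proof.
move=> H; case: (@arg_minnP _ i0 (fun i => i \in A) (fun i => val i) H) => u uA Hu.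
by exists u => // i iA; apply: Hu.
Qed.

Lemma cellZ_upd k n (L : {set {set 'I_k}}) (x : pcell k) q a :
  cellZ n L x -> dvalid n a -> supp (upd x q a) \in L -> cellZ n L (upd x q a).
Proof. by move=> [Vx _] Va S; split => // i; rewrite /upd; case: eqP. Qed.

Lemma VP k n (L : {set {set 'I_k}}) (p : 'I_k) (y : pcell k) : 1 <= n ->
  is_complex L -> cellZ n L y -> y p = Ep n.-1 -> low y p -> p |: supp y \in L ->
  forall j, p <= j -> touches (Mupto n L j) y.
Proof.
move=> n1 HL Hy yp ly SL j pj.
set x := upd y p Eb.
have Hx : cellZ n L x by apply: cellZ_upd => //; rewrite supp_updEb.
have Sx : supp x :\ p \in L.
  by apply: (HL (supp x)); [apply: subsetDl | rewrite supp_updEb].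
have M := @mk_edge k n L n1 p x Hx (upd_eq _ _ _) Sx.
have e : upd x p (Ep n.-1) = y by rewrite /x updK upd_same.
rewrite e in M.
apply: (touches_mono pj); exists x; right.
have lx : low x p := low_upd n1 Eb ly (leqnn p).
exact (Mupto_low n1 M lx ly).
Qed.

Lemma setU1D1 k (p q : 'I_k) (A : {set 'I_k}) : p != q -> p |: (A :\ q) = (p |: A) :\ q.
Proof.
move=> pq; apply/setP => i; rewrite !inE.
by case: (eqVneq i p) => [->|] //=; rewrite pq.
Qed.

Lemma Mupto_S k n (L : {set {set 'I_k}}) (q j : nat) x y : Mbase n L q x y -> q = j.+1 ->
  ~ touches (Mupto n L j) x -> ~ touches (Mupto n L j) y -> Mupto n L q x y.
Proof. by move=> M e hx hy; move: M; rewrite e => M /=; right. Qed.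

Section Char.
Variables (k n : nat) (L : {set {set 'I_k}}) (c : pcell k) (p : 'I_k).
Hypotheses (n1 : 1 <= n) (HL : is_complex L) (Hc : cellZ n L c)
 (Htri : forall i, c i = Em 0 \/ c i = Ep n.-1 \/ c i = Eb)
 (Hp : forall i, c i = Ep n.-1 <-> i = p).

Local Notation S := (supp c).
Local Notation I := (p |: supp c).

Lemma cp : c p = Ep n.-1. Proof. exact/Hp. Qed.
Lemma cS i : i \in S -> c i = Eb. Proof. by rewrite inE; case: (c i). Qed.
Lemma Sc i : c i = Eb -> i \in S. Proof. by rewrite inE => ->. Qed.
Lemma Sne i : i \in S -> i != p.
Proof. by move=> /cS E; apply/eqP => e; move: E; rewrite e cp. Qed.
Lemma cI i : i \notin I -> c i = Em 0.
Proof.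
move=> H; case: (Htri i) => [//|[/Hp E|/Sc iS]].
  by move: H; rewrite E setU11.
by move: H; rewrite in_setU1 iS orbT.
Qed.

Definition pmin := forall i, i \in I -> p <= i.

Lemma low_c : pmin -> low c p.
Proof. move=> pm i ip; apply: cI; apply/negP => /pm; lia. Qed.

Lemma S_gt_p i : pmin -> i \in S -> p < i.
Proof.
move=> pm iS; have := pm i (setU1r _ iS); have := Sne iS.
move=> ne pi; rewrite ltn_neqAle pi andbT; apply: contra ne => /eqP e.
by apply/eqP/val_inj.
Qed.

Lemma c_untouched j : pmin -> I \notin L ->
  (forall l, l \in S -> l <= j -> I :\ l \in L) -> ~ touches (Mupto n L j) c.
Proof.
move=> pm nI Hl [dd [M|M]]; have [l [lj [Mb Hun]]] := Mupto_inv M;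
  have [ql qv] : exists ql : 'I_k, val ql = l by exists (Ordinal (Mbase_lt Mb)).
- case: (Htri ql) => [E | [E | E]].
  + exact: (Mbase_Em0 Mb qv (or_introl E)).
  + have [_ Hpair] := Mbase_at Mb qv; rewrite E in Hpair; exact: Mpair_Epl Hpair.
  + have e := partner_src n1 Mb qv E.
    have qS := Sc E.
    have pq := S_gt_p pm qS.
    have [He _] := Mbase_at Mb qv.
    have e1 : l = l.-1.+1 by rewrite -qv prednK //; apply: leq_ltn_trans pq.
    have [_ Hdd] := Hun l.-1 e1.
    apply: Hdd; apply: (VP (p:=p) n1 HL He.2.1) => //.
    * by rewrite e upd_neq ?cp // eq_sym Sne.
    * rewrite e; exact (low_upd n1 _ (low_c pm) (ltnW pq)).
    * rewrite e supp_updEp setU1D1; first by apply: Hl => //; rewrite qv.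
      by rewrite eq_sym Sne.
    * have pq2 : p < l by rewrite -qv.
      lia.
- case: (Htri ql) => [E | [E | E]].
  + exact: (Mbase_Em0 Mb qv (or_intror E)).
  + have e := partner_tgt n1 Mb qv E.
    have [He _] := Mbase_at Mb qv.
    have := He.1.2; rewrite e supp_updEb.
    have -> : ql = p by apply/Hp.
    by rewrite (negbTE nI).
  + have [_ Hpair] := Mbase_at Mb qv; rewrite E in Hpair; exact: Mpair_Ebr Hpair.
Qed.



Definition Kcond := [set s in L | s \subset I] = [set s : {set 'I_k} | (s \subset I) && (s != I)].

Lemma crit_char : Crit n L c <-> pmin /\ Kcond.
Proof.
split.
- move=> [_ Hnt].
  have pm : pmin.
    move=> i iI; rewrite leqNgt; apply/negP => ip.
    have iA : i \in [set j in I | j < p] by rewrite inE iI.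
    case: (min_ord iA) => u; rewrite inE => /andP [uI up] umin.
    have uS : u \in S.
      move: uI; rewrite in_setU1 => /orP [/eqP e|//].
      by move: up; rewrite e ltnn.
    have lowc : low c u.
      move=> j ju; apply: cI; apply/negP => jI.
      have : u <= j by apply: umin; rewrite inE jI /=; apply: ltn_trans ju up.
      lia.
    have M := mk_edge n1 Hc (cS uS) (HL (subsetDl _ _) Hc.2).
    apply: Hnt; exists (upd c u (Ep n.-1)); left; apply: (ML_of n1 (ltn_ord u)).
    exact (Mupto_low n1 M lowc (low_upd n1 _ lowc (leqnn u))).
  have nI : I \notin L.
    apply/negP => IL; apply: Hnt.
    set x := upd c p Eb.
    have Hx : cellZ n L x by apply: cellZ_upd => //; rewrite supp_updEb.
    have Sx : supp x :\ p \in L.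
      by apply: (HL (s:=supp x)); [apply: subsetDl | rewrite supp_updEb].
    have M := mk_edge n1 Hx (upd_eq _ _ _) Sx.
    have e : upd x p (Ep n.-1) = c by rewrite /x updK upd_same // cp.
    rewrite e in M.
    exists x; right; apply: (ML_of n1 (ltn_ord p)).
    exact (Mupto_low n1 M (low_upd n1 _ (low_c pm) (leqnn _)) (low_c pm)).
  have HC : forall l, l \in S -> I :\ l \in L.
    move=> w wS; apply/negPn/negP => nw.
    have lA : w \in [set i in S | I :\ i \notin L] by rewrite inE wS.
    case: (min_ord lA) => u; rewrite inE => /andP [uS nu] umin.
    have Hlt : forall i, i \in S -> i < u -> I :\ i \in L.
      move=> i iS iu; apply/negPn/negP => ni.
      have : u <= i by apply: umin; rewrite inE iS.
      lia.
    have [d ed] : exists d, d = upd c u (Ep n.-1) by eexists.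
    have M := mk_edge n1 Hc (cS uS) (HL (subsetDl _ _) Hc.2).
    rewrite -ed in M.
    have pu := S_gt_p pm uS.
    have e1 : val u = (val u).-1.+1 by rewrite prednK //; apply: leq_ltn_trans pu.
    apply: Hnt; exists d; left; apply: (ML_of n1 (ltn_ord u)).
    apply: (Mupto_S M e1).
      apply: c_untouched => // i iS ij; apply: Hlt => //.
      move: ij; rewrite -ltnS -e1 //.
    move=> [dd [Md|Md]]; have [l [lj [Mb Hun]]] := Mupto_inv Md;
      have [ql qv] : exists ql : 'I_k, val ql = l by exists (Ordinal (Mbase_lt Mb)).
    + have qlu : ql < u by rewrite qv e1 ltnS.
      have qu : ql != u by apply/eqP => E; move: qlu; rewrite E ltnn.
      have dq : d ql = c ql by rewrite ed upd_neq.
      case: (Htri ql) => [E | [E | E]].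
      * by apply: (Mbase_Em0 Mb qv); left; rewrite -E; exact dq.
      * have [_ Hpair] := Mbase_at Mb qv; rewrite dq E in Hpair; exact: Mpair_Epl Hpair.
      * rewrite -dq in E.
        have e := partner_src n1 Mb qv E.
        rewrite dq in E.
        have qS := Sc E.
        have pq := S_gt_p pm qS.
        have [He _] := Mbase_at Mb qv.
        have pq2 : p < l by rewrite -qv.
        have e2 : l = l.-1.+1 by lia.
        have [_ Hdd] := Hun l.-1 e2.
        apply: Hdd; apply: (VP (p:=p) n1 HL He.2.1) => //.
        -- rewrite e upd_neq; last by rewrite eq_sym Sne.
           by rewrite ed upd_neq ?cp // eq_sym Sne.
        -- rewrite e; apply: (low_upd n1 _ _ (ltnW pq)).
           rewrite ed; exact (low_upd n1 _ (low_c pm) (ltnW pu)).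
        -- rewrite e supp_updEp ed supp_updEp.
           apply: (HL (s:=(p |: S) :\ ql)); last by apply: Hlt.
           apply/subsetP => i; rewrite !inE.
           case: (eqVneq i p) => [->|] /=; first by rewrite eq_sym (Sne qS).
           by move=> _ /and3P [-> _ ->].
        -- lia.
    + have qlu : ql < u by rewrite qv e1 ltnS.
      have qu : ql != u by apply/eqP => E; move: qlu; rewrite E ltnn.
      have dq : d ql = c ql by rewrite ed upd_neq.
      case: (Htri ql) => [E | [E | E]].
      * by apply: (Mbase_Em0 Mb qv); right; rewrite -E; exact dq.
      * rewrite -dq in E.
        have e := partner_tgt n1 Mb qv E.
        have [He _] := Mbase_at Mb qv.
        have := He.1.2; rewrite e supp_updEb ed supp_updEp.
        have -> : ql = p by apply/Hp; rewrite -dq.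
        rewrite setU1D1; first by rewrite (negbTE nu).
        by have := Sne uS; rewrite eq_sym.
      * have [_ Hpair] := Mbase_at Mb qv; rewrite dq E in Hpair; exact: Mpair_Ebr Hpair.
  split => //.
  apply/setP => s; rewrite !inE.
  case sI: (s \subset I); rewrite ?andbF ?andbT //=.
  case: (eqVneq s I) => [->|ne]; first by rewrite (negbTE nI).
  apply/idP; have : ~~ (I \subset s).
    by apply: contra ne => Is; rewrite eqEsubset sI Is.
  case/subsetPn => i iI nis.
  move: iI; rewrite in_setU1 => /orP [/eqP ip | iS].
    apply: (HL (s:=S)); last exact: Hc.2.
    apply/subsetP => x xs; have := subsetP sI x xs; rewrite in_setU1 => /orP [/eqP xp|//].
    by move: nis; rewrite ip -xp xs.
  apply: (HL (s:=I :\ i)); last exact: HC.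
  apply/subsetP => x xs; rewrite in_setD1 (subsetP sI x xs) andbT.
  by apply: contraNneq nis => <-.
- move=> [pm KC].
  have nI : I \notin L.
    apply/negP => IL.
    have : I \in [set s in L | s \subset I] by rewrite inE IL subxx.
    by rewrite KC inE eqxx andbF.
  have HC : forall l, l \in S -> I :\ l \in L.
    move=> l lS.
    have : I :\ l \in [set s : {set 'I_k} | (s \subset I) && (s != I)].
      rewrite inE subsetDl /=; apply/eqP => E.
      have : l \in I :\ l by rewrite E in_setU1 lS orbT.
      by rewrite in_setD1 eqxx.
    by rewrite -KC inE => /andP [].
  split => //; exact: (c_untouched pm nI (fun l lS _ => HC l lS)).
Qed.

End Char.

Lemma imT m (I : {set 'I_m}) : [set (@Iemb m I) j | j in [set: 'I_#|I|]] = I.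
Proof.
apply/setP => x; apply/imsetP/idP => [[j _ ->]|xI]; first exact: enum_valP.
by exists (enum_rank_in xI x); [rewrite inE | rewrite /Iemb enum_rankK_in].
Qed.

Theorem lemma3p7 (n m : nat) (K : {set {set 'I_m}}) (c : pcell m) (p : 'I_m) :
  1 <= n ->
  is_complex K ->
  cellZ n K c ->
  (forall i, c i = Em 0 \/ c i = Ep n.-1 \/ c i = Eb) ->
  (forall i, c i = Ep n.-1 <-> i = p) ->
  let I := p |: supp c in
  Crit n K c <->
  (Crit n (restrictK K I) (restrictc c I) /\
   [set s in K | s \subset I] = [set s : {set 'I_m} | (s \subset I) && (s != I)]).
Proof.
move=> n1 HK Hc Htri Hp I.
have Hp0 : p \in I by rewrite /I setU11.
set p' := enum_rank_in Hp0 p.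
have ep' : enum_val p' = p by rewrite /p' enum_rankK_in.
set c' := restrictc c I.
have HK' : is_complex (restrictK K I).
  move=> s t ts; rewrite !inE; apply: HK; exact: imsetS.
have suppc' : [set (@Iemb m I) j | j in supp c'] = supp c.
  apply/setP => x; apply/imsetP/idP => [[j]|xS].
    by rewrite !inE => jS ->.
  have xI : x \in I by rewrite /I setU1r.
  exists (enum_rank_in xI x); last by rewrite /Iemb enum_rankK_in.
  by rewrite inE /c' /restrictc /Iemb enum_rankK_in //; rewrite inE in xS.
have Hc' : cellZ n (restrictK K I) c'.
  split; first by move=> i; apply: Hc.1.
  by rewrite inE suppc'; exact: Hc.2.
have Htri' : forall i, c' i = Em 0 \/ c' i = Ep n.-1 \/ c' i = Eb by move=> i; apply: Htri.
have Hp' : forall i, c' i = Ep n.-1 <-> i = p'.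
  move=> i; rewrite /c' /restrictc Hp; split => [e|->//].
  by apply: enum_val_inj; rewrite ep'.
have I'T : p' |: supp c' = setT.
  apply/setP => j; rewrite inE; have := enum_valP j; rewrite -/I /I in_setU1.
  case/orP => [/eqP e|jS].
    have -> : j = p' by apply/Hp'; rewrite /c' /restrictc /Iemb e; exact/Hp.
    by rewrite !inE eqxx.
  by rewrite inE in jS; rewrite !inE /c' /restrictc /Iemb jS orbT.
rewrite (crit_char n1 HK Hc Htri Hp) (crit_char n1 HK' Hc' Htri' Hp').
have pmE : pmin c p <-> pmin c' p'.
  split => pm.
    move=> j _; rewrite leqNgt; apply/negP => jp.
    have := ev_mono jp; rewrite ep' => lt.
    by have := leq_ltn_trans (pm _ (enum_valP j)) lt; rewrite ltnn.
  move=> i iI; rewrite leqNgt; apply/negP => ip.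
  have ej : enum_val (enum_rank_in Hp0 i) = i by rewrite enum_rankK_in.
  have := pm (enum_rank_in Hp0 i); rewrite I'T inE => /(_ isT).
  rewrite leq_eqVlt => /orP [/eqP e|lt].
    have e2 : p' = enum_rank_in Hp0 i by apply: val_inj.
    by move: ip; rewrite -ej -e2 ep' ltnn.
  have := ev_mono lt; rewrite ej ep' => lt2.
  by have := ltn_trans lt2 ip; rewrite ltnn.
split.
- move=> [pm kc]; split => //; split; first by apply/pmE.
  have kc0 := kc; rewrite /Kcond in kc0.
  rewrite /Kcond I'T; apply/setP => s; rewrite !inE subsetT /=.
  have := congr1 (fun A : {set {set 'I_m}} => [set (@Iemb m I) j | j in s] \in A) kc0.
  rewrite /= !inE.
  have sub : [set (@Iemb m I) j | j in s] \subset I.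
    by apply/subsetP => x /imsetP [j _ ->]; exact: enum_valP.
  rewrite sub andbT /= => ->.
  congr negb; apply/eqP/eqP => [E|->]; last exact: imT.
  apply: (imset_inj (@enum_val_inj _ (mem I))); rewrite E; symmetry; exact: imT.
- by move=> [[pm _] kc]; split => //; apply/pmE.
Qed.
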